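(* Let $\mathfrak{q}_1,\dots,\mathfrak{q}_n$ be finite-dimensional complex simply-complete Lie algebras, each equipped with a CPA-product. Then the direct Lie algebra sum $\mathfrak{q}_1\oplus\cdots\oplus\mathfrak{q}_n$ admits the CPA-product given componentwise by $(x_1,\dots,x_n)\cdot(y_1,\dots,y_n)=(x_1\cdot y_1,\dots,x_n\cdot y_n)$. Conversely, if $\mathfrak{q}=\mathfrak{q}_1\oplus\cdots\oplus\mathfrak{q}_n$ is a complete Lie algebra which is a direct sum of simply-complete ideals $\mathfrak{q}_i$, then every CPA-product on $\mathfrak{q}$ is of this componentwise form (for CPA-products on the $\mathfrak{q}_i$).
   Context: A Lie algebra $\mathfrak{g}$ is complete if $Z(\mathfrak{g})=0$ and every derivation is inner ($\mathrm{Der}(\mathfrak{g})=\mathrm{ad}(\mathfrak{g})$); it is simply-complete if it is complete and no non-trivial ideal of it is complete. A CPA-product on a Lie algebra is a bilinear product $x\cdot y$ satisfying, for all $x,y,z$: $x\cdot y=y\cdot x$; $[x,y]\cdot z=x\cdot(y\cdot z)-y\cdot(x\cdot z)$; $x\cdot[y,z]=[x\cdot y,z]+[y,x\cdot z]$. *)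

(* Defs.v *)
From HB Require Import structures.
From mathcomp Require Import all_boot all_order all_algebra.
From mathcomp Require Import complex.
From mathcomp Require Import reals.
Set Implicit Arguments. Unset Strict Implicit. Unset Printing Implicit Defensive.
Import Order.TTheory GRing.Theory Num.Theory.
Local Open Scope ring_scope.

Section LieDefs.
Variables (F : fieldType) (L : vectType F).
Implicit Types (br p : L -> L -> L) (U I : {vspace L}).

Definition is_lie_bracket br : Prop :=
  [/\ (forall a x y z, br (a *: x + y) z = a *: br x z + br y z),
      (forall a x y z, br x (a *: y + z) = a *: br x y + br x z),
      (forall x, br x x = 0) &
      (forall x y z, br x (br y z) + br y (br z x) + br z (br x y) = 0)].

Definition lie_ideal br U I : Prop :=
  (I <= U)%VS /\ (forall x y, x \in U -> y \in I -> br x y \in I).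

(* D is a derivation of the Lie algebra U (only its values on U matter). *)
Definition lie_derivation br U (D : L -> L) : Prop :=
  [/\ (forall x, x \in U -> D x \in U),
      (forall a x y, x \in U -> y \in U -> D (a *: x + y) = a *: D x + D y) &
      (forall x y, x \in U -> y \in U -> D (br x y) = br (D x) y + br x (D y))].

Definition lie_inner br U (D : L -> L) : Prop :=
  exists2 a, a \in U & forall x, x \in U -> D x = br a x.

Definition lie_complete br U : Prop :=
  (forall z, z \in U -> (forall x, x \in U -> br x z = 0) -> z = 0) /\
  (forall D, lie_derivation br U D -> lie_inner br U D).

Definition lie_simply_complete br U : Prop :=
  lie_complete br U /\
  (forall I, lie_ideal br U I -> I != 0%VS -> I != U -> ~ lie_complete br I).

Definition cpa_product br U p : Prop :=
  [/\ (forall x y, x \in U -> y \in U -> p x y \in U),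
      (forall a x y z, x \in U -> y \in U -> z \in U ->
          p (a *: x + y) z = a *: p x z + p y z),
      (forall x y, x \in U -> y \in U -> p x y = p y x),
      (forall x y z, x \in U -> y \in U -> z \in U ->
          p (br x y) z = p x (p y z) - p y (p x z)) &
      (forall x y z, x \in U -> y \in U -> z \in U ->
          p x (br y z) = br (p x y) z + br y (p x z))].

Definition componentwise n (q : 'I_n -> {vspace L})
    (p : 'I_n -> L -> L -> L) (P : L -> L -> L) : Prop :=
  forall x y : 'I_n -> L, (forall i, x i \in q i) -> (forall i, y i \in q i) ->
    P (\sum_i x i) (\sum_i y i) = \sum_i p i (x i) (y i).

End LieDefs.

(* Main.v *)
Require Import Defs.
From HB Require Import structures.
From mathcomp Require Import all_boot all_order all_algebra.
From mathcomp Require Import complex.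
From mathcomp Require Import reals.
Import GRing.Theory.
Local Open Scope ring_scope.

Section Aux.
Variables (F : fieldType) (L : vectType F) (n : nat) (q : 'I_n -> {vspace L}).
Hypothesis dx : directv (\sum_i q i)%VS.
Hypothesis full : (\sum_i q i)%VS = fullv.

Lemma uniq_dec (x y : 'I_n -> L) : (forall i, x i \in q i) -> (forall i, y i \in q i) ->
  \sum_i x i = \sum_i y i -> forall i, x i = y i.
Proof.
move=> Hx Hy e i; apply/eqP; rewrite -subr_eq0; apply/eqP.
move: dx => /directv_sum_independent H.
apply: (H (fun i => x i - y i)) => //.
  by move=> j _; apply: memvB.
by rewrite sumrB e subrr.
Qed.

Lemma sum_single (i : 'I_n) (x : L) : \sum_k (if k == i then x else 0) = x.
Proof.
by rewrite (bigD1 i) //= eqxx big1 ?addr0 // => k /negPf ->.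
Qed.

Lemma cap0 (i j : 'I_n) x : i != j -> x \in q i -> x \in q j -> x = 0.
Proof.
move=> ij xi xj.
have := @uniq_dec (fun k => if k == i then x else 0)
                 (fun k => if k == j then x else 0).
move=> /(_ _ _ _ i); rewrite eqxx (negPf ij); apply.
- by move=> k; case: eqP => [->|_] //; rewrite mem0v.
- by move=> k; case: eqP => [->|_] //; rewrite mem0v.
- by rewrite !sum_single.
Qed.

Definition pr i := sumv_pi_for (esym full) i.

Lemma pr_in i v : pr i v \in q i.
Proof. exact: memv_sum_pi. Qed.

Lemma pr_sum v : \sum_i pr i v = v.
Proof. exact: (sumv_pi_sum (esym full) (memvf v)). Qed.

Lemma pr_dec (x : 'I_n -> L) : (forall i, x i \in q i) -> forall j, pr j (\sum_i x i) = x j.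
Proof.
move=> Hx j; apply: (@uniq_dec (fun i => pr i (\sum_i x i)) x) => //; first by move=> i; apply: pr_in.
by rewrite pr_sum.
Qed.

Lemma prP i a x y : pr i (a *: x + y) = a *: pr i x + pr i y.
Proof. by rewrite linearP. Qed.

Lemma sum_diag (f : L -> L -> L) (a b : 'I_n -> L) :
  (forall x y z, f (x + y) z = f x z + f y z) ->
  (forall x y z, f x (y + z) = f x y + f x z) ->
  (forall i j, i != j -> f (a i) (b j) = 0) ->
  f (\sum_i a i) (\sum_j b j) = \sum_i f (a i) (b i).
Proof.
move=> Hl Hr H0.
have f0l z : f 0 z = 0.
  by have := Hl 0 0 z; rewrite addr0 => /(congr1 (fun t => t - f 0 z)); rewrite subrr addrK.
have f0r z : f z 0 = 0.
  by have := Hr z 0 0; rewrite addr0 => /(congr1 (fun t => t - f z 0)); rewrite subrr addrK.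
rewrite (big_morph (fun x => f x (\sum_j b j)) (fun x y => Hl x y _) (f0l _)).
apply: eq_bigr => i _.
rewrite (big_morph (fun y => f (a i) y) (Hr (a i)) (f0r _)).
rewrite (bigD1 i) //= big1 ?addr0 // => j ji; apply: H0; by rewrite eq_sym.
Qed.


Variable br : L -> L -> L.
Hypothesis Hbr : is_lie_bracket br.
Hypothesis Hid : forall i, lie_ideal br fullv (q i).

Lemma brDl x y z : br (x + y) z = br x z + br y z.
Proof. by case: Hbr => H _ _ _; have := H 1 x y z; rewrite !scale1r. Qed.

Lemma brDr x y z : br x (y + z) = br x y + br x z.
Proof. by case: Hbr => _ H _ _; have := H 1 x y z; rewrite !scale1r. Qed.

Lemma br_anti x y : br x y = - br y x.
Proof.
case: Hbr => _ _ J _.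
have := J (x + y); rewrite brDl !brDr !J add0r addr0 => /eqP.
by rewrite addr_eq0 => /eqP.
Qed.

Lemma br_in i x y : y \in q i -> br x y \in q i.
Proof. by move=> Hy; case: (Hid i) => _ H; apply: H => //; apply: memvf. Qed.

Lemma br_inl i x y : x \in q i -> br x y \in q i.
Proof. by move=> Hx; rewrite br_anti memvN br_in. Qed.

Lemma br_pr x y : br x y = \sum_i br (pr i x) (pr i y).
Proof.
rewrite -{1}(pr_sum x) -{1}(pr_sum y); apply: sum_diag.
- exact: brDl.
- exact: brDr.
- move=> i j ij; apply: (@cap0 i j _ ij).
    by apply: br_inl; apply: pr_in.
  by apply: br_in; apply: pr_in.
Qed.

Lemma pr_br i x y : pr i (br x y) = br (pr i x) (pr i y).
Proof.
rewrite br_pr pr_dec // => k; apply: br_in; apply: pr_in.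
Qed.

Lemma part1 (p : 'I_n -> L -> L -> L) : (forall i, cpa_product br (q i) (p i)) ->
     exists P, cpa_product br fullv P /\ componentwise q p P.
Proof.
move=> Hp.
pose P x y := \sum_i p i (pr i x) (pr i y).
have e i y z : pr i (P y z) = p i (pr i y) (pr i z).
  rewrite /P pr_dec // => k; case: (Hp k) => H _ _ _ _; apply: H; apply: pr_in.
exists P; split; last first.
  move=> x y Hx Hy; apply: eq_bigr => i _; by rewrite !pr_dec.
split.
- by move=> *; apply: memvf.
- move=> a x y z _ _ _; rewrite /P scaler_sumr -big_split; apply: eq_bigr => i _.
  rewrite prP; case: (Hp i) => _ H _ _ _; apply: H; apply: pr_in.
- move=> x y _ _; rewrite /P; apply: eq_bigr => i _.
  case: (Hp i) => _ _ H _ _; apply: H; apply: pr_in.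
- move=> x y z _ _ _; rewrite /P -sumrB; apply: eq_bigr => i _.
  rewrite !e pr_br; case: (Hp i) => _ _ _ H _; apply: H; apply: pr_in.
- move=> x y z _ _ _.
  rewrite [br (P x y) z]br_pr [br y (P x z)]br_pr -big_split /P.
  apply: eq_bigr => i _; rewrite !e pr_br.
  case: (Hp i) => _ _ _ _ H; apply: H; apply: pr_in.
Qed.

Lemma part2 : lie_complete br fullv ->
   forall P, cpa_product br fullv P ->
     exists p : 'I_n -> L -> L -> L,
       (forall i, cpa_product br (q i) (p i)) /\ componentwise q p P.
Proof.
move=> [_ Hd] P [P1 P2 P3 P4 P5].
have PDl x y z : P (x + y) z = P x z + P y z.
  by have := P2 1 x y z; rewrite !scale1r; apply; apply: memvf.
have PDr x y z : P x (y + z) = P x y + P x z.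
  by rewrite P3 ?memvf // PDl P3 ?memvf // [P z x]P3 ?memvf.
have key i j x y : x \in q i -> y \in q j -> P x y \in q j.
  move=> Hx Hy.
  have [|a _ ea] := Hd (P x).
    split.
    - by move=> *; apply: memvf.
    - move=> b u v _ _; rewrite P3 ?memvf // P2 ?memvf //.
      by rewrite P3 ?memvf // [P v x]P3 ?memvf.
    - by move=> u v _ _; apply: P5; apply: memvf.
  by rewrite ea ?memvf // br_in.
exists (fun _ => P); split.
  move=> i; split.
  - by move=> x y Hx Hy; apply: (key i).
  - by move=> *; apply: P2; apply: memvf.
  - by move=> *; apply: P3; apply: memvf.
  - by move=> *; apply: P4; apply: memvf.
  - by move=> *; apply: P5; apply: memvf.
move=> x y Hx Hy; apply: sum_diag => // i j ij.
apply: (@cap0 i j _ ij); last exact: key.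
by rewrite P3 ?memvf //; apply: key.
Qed.

End Aux.

Theorem mainTheorem11 (R : realType) (L : vectType R[i]) (br : L -> L -> L)
    (n : nat) (q : 'I_n -> {vspace L}) :
  is_lie_bracket br ->
  (forall i, lie_ideal br fullv (q i)) ->
  directv (\sum_i q i)%VS ->
  (\sum_i q i)%VS = fullv ->
  (forall i, lie_simply_complete br (q i)) ->
  (forall p : 'I_n -> L -> L -> L, (forall i, cpa_product br (q i) (p i)) ->
     exists P, cpa_product br fullv P /\ componentwise q p P) /\
  (lie_complete br fullv ->
   forall P, cpa_product br fullv P ->
     exists p : 'I_n -> L -> L -> L,
       (forall i, cpa_product br (q i) (p i)) /\ componentwise q p P).
Proof.
move=> Hbr Hid dx full _; split.
  by move=> p Hp; apply: (@part1 _ _ n q dx full br Hbr Hid p Hp).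
exact: (@part2 _ _ n q dx br Hid).
Qed.
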